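(* There is a constant $\alpha'\in(0,\pi/2)$ such that the following holds. Let $P,P'\subset\mathbb R^3$ be two open cuboids and $Q$ the convex hull of $P\cup P'$. If $x_c$ is a vertex of $P$ such that $d(x_c,P')=d_H(P,P')$, then $x_c$ is a vertex of $Q$, and $Q$ is contained in an open spherical cone with vertex $x_c$ and opening angle $2\alpha'$. The constant $\alpha'$ is independent of $P$, $P'$ and their location.
   Context: An open cuboid is the image of $]0,a[\times]0,b[\times]0,c[$ ($a,b,c>0$) under a rigid motion. $d_H(P,P')=\max(\sup_{x\in P}d(x,P'),\sup_{x'\in P'}d(x',P))$ is the Hausdorff distance. An open spherical cone with vertex $x_c$, axis unit vector $v$ and opening angle $2\theta$ is $\{x\ne x_c:(x-x_c)\cdot v>|x-x_c|\cos\theta\}$. *)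

(* Defs.v *)
From Stdlib Require Import Reals Lra.
Open Scope R_scope.

Record V3 := mkV3 { vx : R; vy : R; vz : R }.

Definition vadd (p q : V3) : V3 := mkV3 (vx p + vx q) (vy p + vy q) (vz p + vz q).
Definition vsub (p q : V3) : V3 := mkV3 (vx p - vx q) (vy p - vy q) (vz p - vz q).
Definition vscale (s : R) (p : V3) : V3 := mkV3 (s * vx p) (s * vy p) (s * vz p).
Definition dot (p q : V3) : R := vx p * vx q + vy p * vy q + vz p * vz q.
Definition vnorm (p : V3) : R := sqrt (dot p p).
Definition dist (p q : V3) : R := vnorm (vsub p q).

(* An open cuboid: the image of ]0,a[ x ]0,b[ x ]0,c[ under the rigid motion
   (s,t,r) |-> o + s u1 + t u2 + r u3, where (u1,u2,u3) is orthonormal. *)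
Record cuboid := mkCuboid {
  c_o : V3; c_u1 : V3; c_u2 : V3; c_u3 : V3;
  c_a : R; c_b : R; c_c : R }.

Definition valid_cuboid (C : cuboid) : Prop :=
  0 < c_a C /\ 0 < c_b C /\ 0 < c_c C /\
  dot (c_u1 C) (c_u1 C) = 1 /\ dot (c_u2 C) (c_u2 C) = 1 /\
  dot (c_u3 C) (c_u3 C) = 1 /\ dot (c_u1 C) (c_u2 C) = 0 /\
  dot (c_u1 C) (c_u3 C) = 0 /\ dot (c_u2 C) (c_u3 C) = 0.

Definition cuboid_point (C : cuboid) (s t r : R) : V3 :=
  vadd (c_o C) (vadd (vscale s (c_u1 C)) (vadd (vscale t (c_u2 C)) (vscale r (c_u3 C)))).

Definition cuboid_set (C : cuboid) (x : V3) : Prop :=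
  exists s t r, 0 < s < c_a C /\ 0 < t < c_b C /\ 0 < r < c_c C /\
    x = cuboid_point C s t r.

Definition cuboid_vertex (C : cuboid) (x : V3) : Prop :=
  exists e1 e2 e3 : bool,
    x = cuboid_point C (if e1 then c_a C else 0) (if e2 then c_b C else 0)
                       (if e3 then c_c C else 0).

Definition convex (S : V3 -> Prop) : Prop :=
  forall y z t, S y -> S z -> 0 <= t <= 1 ->
    S (vadd (vscale t y) (vscale (1 - t) z)).

Definition convex_hull (S : V3 -> Prop) (x : V3) : Prop :=
  forall K : V3 -> Prop, convex K -> (forall y, S y -> K y) -> K x.

Definition closure (S : V3 -> Prop) (x : V3) : Prop :=
  forall eps, 0 < eps -> exists y, S y /\ dist x y < eps.

Definition extreme_point (K : V3 -> Prop) (x : V3) : Prop :=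
  K x /\ forall y z t, K y -> K z -> 0 < t < 1 ->
    x = vadd (vscale t y) (vscale (1 - t) z) -> y = x /\ z = x.

(* A vertex of a (possibly open) convex polytope Q: an extreme point of its closure *)
Definition polytope_vertex (Q : V3 -> Prop) (x : V3) : Prop :=
  extreme_point (closure Q) x.

Definition is_lower_bound (E : R -> Prop) (m : R) : Prop := forall y, E y -> m <= y.
Definition is_glb (E : R -> Prop) (m : R) : Prop :=
  is_lower_bound E m /\ forall b, is_lower_bound E b -> b <= m.

Definition point_set_dist (x : V3) (S : V3 -> Prop) (r : R) : Prop :=
  is_glb (fun d => exists y, S y /\ d = dist x y) r.

Definition hausdorff_dist (P P' : V3 -> Prop) (h : R) : Prop :=
  exists h1 h2,
    is_lub (fun d => exists x, P x /\ point_set_dist x P' d) h1 /\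
    is_lub (fun d => exists x', P' x' /\ point_set_dist x' P d) h2 /\
    h = Rmax h1 h2.

(* Open spherical cone with vertex xc, unit axis v, opening angle 2 theta *)
Definition spherical_cone (xc v : V3) (theta : R) (x : V3) : Prop :=
  x <> xc /\ dot (vsub x xc) v > dist x xc * cos theta.

(* Main.v *)
Require Import Defs.
From Stdlib Require Import Reals Lra Psatz.
Open Scope R_scope.
Notation dist := Defs.dist.


Ltac vsimpl := repeat match goal with v : V3 |- _ => destruct v end;
  unfold vadd, vsub, vscale, dot in *; simpl in *.

Definition lc (a1 a2 a3 : R) (u1 u2 u3 : V3) : V3 :=
  vadd (vscale a1 u1) (vadd (vscale a2 u2) (vscale a3 u3)).

Lemma dot_pos (p : V3) : 0 <= dot p p.
Proof. destruct p; unfold dot; simpl; nra. Qed.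

Lemma vnorm_pos p : 0 <= vnorm p.
Proof. apply sqrt_pos. Qed.

Lemma vnorm_sq p : vnorm p * vnorm p = dot p p.
Proof. apply sqrt_sqrt, dot_pos. Qed.

Lemma sqrt_le_of_sq x y : 0 <= y -> x <= y * y -> sqrt x <= y.
Proof. intros H H0. rewrite <- (sqrt_square y H). apply sqrt_le_1_alt; exact H0. Qed.

Lemma cs_sq p q : dot p q * dot p q <= dot p p * dot q q.
Proof. destruct p as [a b c], q as [d e f]; unfold dot; simpl.
  assert ((a*a+b*b+c*c)*(d*d+e*e+f*f) - (a*d+b*e+c*f)*(a*d+b*e+c*f) =
    (a*e-b*d)*(a*e-b*d) + (a*f-c*d)*(a*f-c*d) + (b*f-c*e)*(b*f-c*e)) by ring.
  pose proof (Rle_0_sqr (a*e-b*d)); pose proof (Rle_0_sqr (a*f-c*d));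
  pose proof (Rle_0_sqr (b*f-c*e)); unfold Rsqr in *; lra. Qed.

Lemma cs p q : dot p q <= vnorm p * vnorm q.
Proof.
  pose proof (cs_sq p q). pose proof (vnorm_sq p). pose proof (vnorm_sq q).
  pose proof (vnorm_pos p). pose proof (vnorm_pos q).
  pose proof (Rmult_le_pos _ _ H2 H3).
  destruct (Rle_or_lt (dot p q) 0). lra.
  assert (dot p q * dot p q <= (vnorm p * vnorm q) * (vnorm p * vnorm q)).
  { replace ((vnorm p * vnorm q) * (vnorm p * vnorm q)) with
      ((vnorm p * vnorm p) * (vnorm q * vnorm q)) by ring. rewrite H0, H1. exact H. }
  destruct (Rle_or_lt (dot p q) (vnorm p * vnorm q)); auto.
  assert (vnorm p * vnorm q * (vnorm p * vnorm q) < dot p q * dot p q).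
  { apply Rmult_le_0_lt_compat; lra. } lra.
Qed.

Lemma cs_abs p q : - (vnorm p * vnorm q) <= dot p q.
Proof.
  pose proof (cs (vscale (-1) p) q).
  assert (dot (vscale (-1) p) q = - dot p q) by (vsimpl; ring).
  assert (vnorm (vscale (-1) p) = vnorm p).
  { unfold vnorm. f_equal. vsimpl. ring. }
  rewrite H1 in H. lra.
Qed.

Lemma vnorm_add p q : vnorm (vadd p q) <= vnorm p + vnorm q.
Proof.
  apply sqrt_le_of_sq. pose proof (vnorm_pos p); pose proof (vnorm_pos q); lra.
  assert (dot (vadd p q) (vadd p q) = dot p p + 2 * dot p q + dot q q) by (vsimpl; ring).
  pose proof (cs p q). pose proof (vnorm_sq p). pose proof (vnorm_sq q). nra.
Qed.

Lemma vnorm_scale k p : vnorm (vscale k p) = Rabs k * vnorm p.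
Proof.
  unfold vnorm. assert (dot (vscale k p) (vscale k p) = k² * dot p p)
    by (unfold Rsqr; vsimpl; ring).
  rewrite H, sqrt_mult_alt, sqrt_Rsqr_abs; auto. apply Rle_0_sqr.
Qed.

Lemma vnorm_zero p : vnorm p = 0 -> p = mkV3 0 0 0.
Proof.
  intros H. apply sqrt_eq_0 in H; [|apply dot_pos].
  destruct p as [x y z]; unfold dot in H; simpl in H.
  assert (x = 0) by nra. assert (y = 0) by nra. assert (z = 0) by nra. subst; auto.
Qed.

Lemma vsub_zero p q : vsub p q = mkV3 0 0 0 -> p = q.
Proof. destruct p, q; unfold vsub; simpl; intros H; injection H; intros.
  f_equal; lra. Qed.

Lemma vnorm_sub_sym p q : vnorm (vsub p q) = vnorm (vsub q p).
Proof. unfold vnorm; f_equal; vsimpl; ring. Qed.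

Lemma vdist_tri p q r : dist p r <= dist p q + dist q r.
Proof.
  unfold dist. replace (vsub p r) with (vadd (vsub p q) (vsub q r)) by (vsimpl; f_equal; ring).
  apply vnorm_add.
Qed.

Lemma dot_lc_gen a1 a2 a3 b1 b2 b3 u1 u2 u3 :
  dot (lc a1 a2 a3 u1 u2 u3) (lc b1 b2 b3 u1 u2 u3) =
  a1*b1*dot u1 u1 + a2*b2*dot u2 u2 + a3*b3*dot u3 u3 +
  (a1*b2+a2*b1)*dot u1 u2 + (a1*b3+a3*b1)*dot u1 u3 + (a2*b3+a3*b2)*dot u2 u3.
Proof. unfold lc; vsimpl; ring. Qed.

Lemma dot_lc a1 a2 a3 b1 b2 b3 (C : cuboid) : valid_cuboid C ->
  dot (lc a1 a2 a3 (c_u1 C) (c_u2 C) (c_u3 C)) (lc b1 b2 b3 (c_u1 C) (c_u2 C) (c_u3 C))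
  = a1*b1 + a2*b2 + a3*b3.
Proof.
  intros (_&_&_&H1&H2&H3&H4&H5&H6). rewrite dot_lc_gen, H1,H2,H3,H4,H5,H6. ring.
Qed.

Lemma dot_lc_l a1 a2 a3 u1 u2 u3 w :
  dot (lc a1 a2 a3 u1 u2 u3) w = a1 * dot u1 w + a2 * dot u2 w + a3 * dot u3 w.
Proof. unfold lc; vsimpl; ring. Qed.

Lemma pt_sub (C : cuboid) s t r s' t' r' :
  vsub (cuboid_point C s t r) (cuboid_point C s' t' r') =
  lc (s - s') (t - t') (r - r') (c_u1 C) (c_u2 C) (c_u3 C).
Proof. unfold cuboid_point, lc. vsimpl. f_equal; ring. Qed.

Lemma pt_seg (C : cuboid) e1 e2 e3 m1 m2 m3 l :
  vadd (vscale (1 - l) (cuboid_point C e1 e2 e3)) (vscale l (cuboid_point C m1 m2 m3))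
  = cuboid_point C ((1-l)*e1 + l*m1) ((1-l)*e2 + l*m2) ((1-l)*e3 + l*m3).
Proof. unfold cuboid_point. vsimpl. f_equal; ring. Qed.

Lemma seg_dist p m l : 0 <= l ->
  dist p (vadd (vscale (1 - l) p) (vscale l m)) = l * dist p m.
Proof.
  intros. unfold dist. replace (vsub p (vadd (vscale (1 - l) p) (vscale l m)))
    with (vscale l (vsub p m)) by (vsimpl; f_equal; ring).
  rewrite vnorm_scale, Rabs_pos_eq; auto.
Qed.

Lemma in_seg (C : cuboid) e1 e2 e3 l : valid_cuboid C ->
  0 <= e1 <= c_a C -> 0 <= e2 <= c_b C -> 0 <= e3 <= c_c C -> 0 < l < 1 ->
  cuboid_set C (vadd (vscale (1 - l) (cuboid_point C e1 e2 e3))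
                     (vscale l (cuboid_point C (c_a C / 2) (c_b C / 2) (c_c C / 2)))).
Proof.
  intros (Ha&Hb&Hc&_) ? ? ? ?. rewrite pt_seg.
  do 3 eexists; split; [|split; [|split; [|reflexivity]]]; split; nra.
Qed.

Lemma small_l d eps : 0 <= d -> 0 < eps -> exists l, 0 < l < 1 /\ l * d < eps.
Proof.
  intros. exists (Rmin (1/2) (eps / (2 * (d + 1)))).
  assert (0 < eps / (2 * (d + 1))) by (apply Rdiv_lt_0_compat; lra).
  split. split. apply Rmin_glb_lt; lra. pose proof (Rmin_l (1/2) (eps / (2 * (d + 1)))); lra.
  pose proof (Rmin_r (1/2) (eps / (2 * (d + 1)))).
  apply Rle_lt_trans with (eps / (2 * (d + 1)) * d). apply Rmult_le_compat_r; lra.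
  unfold Rdiv. rewrite Rmult_assoc.
  assert (/ (2 * (d + 1)) * d < 1).
  { apply Rmult_lt_reg_l with (2*(d+1)). lra. field_simplify; lra. }
  nra.
Qed.

Lemma glb_exists (E : R -> Prop) : (exists x, E x) -> (forall x, E x -> 0 <= x) ->
  exists m, is_glb E m.
Proof.
  intros [x0 Hx0] Hpos.
  destruct (completeness (fun z => E (- z))) as [m [Hm1 Hm2]].
  { exists 0. intros z Hz. apply Hpos in Hz. lra. }
  { exists (- x0). rewrite Ropp_involutive. auto. }
  exists (- m). split.
  - intros y Hy. assert (- y <= m) by (apply Hm1; rewrite Ropp_involutive; auto). lra.
  - intros b Hb. assert (m <= - b).
    { apply Hm2. intros z Hz. apply Hb in Hz. lra. } lra.
Qed.

Lemma glb_approx E m eps : is_glb E m -> 0 < eps -> exists e, E e /\ e < m + eps.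
Proof.
  intros [H1 H2] Heps. destruct (Classical_Prop.classic (exists e, E e /\ e < m + eps)); auto.
  assert (m + eps <= m). { apply H2. intros y Hy. destruct (Rle_or_lt (m+eps) y); auto.
    exfalso; apply H; eauto. } lra.
Qed.

Lemma mid_in (C : cuboid) : valid_cuboid C ->
  cuboid_set C (cuboid_point C (c_a C / 2) (c_b C / 2) (c_c C / 2)).
Proof. intros (Ha&Hb&Hc&_). do 3 eexists; split; [|split;[|split;[|reflexivity]]]; lra. Qed.

Lemma psd_exists (C : cuboid) x : valid_cuboid C ->
  exists d, point_set_dist x (cuboid_set C) d.
Proof.
  intros HC. apply glb_exists.
  - eexists; exists (cuboid_point C (c_a C / 2) (c_b C / 2) (c_c C / 2)); split; [apply mid_in; auto|reflexivity].
  - intros d [y [_ ->]]. apply vnorm_pos.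
Qed.

Lemma haus_approx1 P P' r x eps : hausdorff_dist P P' r -> P x ->
  (exists d, point_set_dist x P' d) -> 0 < eps -> exists y, P' y /\ dist x y < r + eps.
Proof.
  intros (h1&h2&[Hl _]&_&->) Hx [d Hd] Heps.
  assert (d <= h1) by (apply Hl; eauto).
  destruct (glb_approx _ _ _ Hd Heps) as [e [[y [Hy ->]] He]].
  exists y; split; auto. pose proof (Rmax_l h1 h2). lra.
Qed.

Lemma haus_approx2 P P' r x eps : hausdorff_dist P P' r -> P' x ->
  (exists d, point_set_dist x P d) -> 0 < eps -> exists y, P y /\ dist x y < r + eps.
Proof.
  intros (h1&h2&_&[Hl _]&->) Hx [d Hd] Heps.
  assert (d <= h2) by (apply Hl; eauto).
  destruct (glb_approx _ _ _ Hd Heps) as [e [[y [Hy ->]] He]].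
  exists y; split; auto. pose proof (Rmax_r h1 h2). lra.
Qed.

Definition clamp (a s : R) := Rmax 0 (Rmin a s).

Lemma clamp_in a s : 0 < a -> 0 <= clamp a s <= a.
Proof. intros. unfold clamp, Rmax, Rmin.
  destruct (Rle_dec a s); destruct (Rle_dec 0 _); lra. Qed.

Lemma clamp_prop a s y : 0 < a -> 0 <= y <= a -> 0 <= (y - clamp a s) * (clamp a s - s).
Proof. intros. unfold clamp, Rmax, Rmin.
  destruct (Rle_dec a s); destruct (Rle_dec 0 _); nra. Qed.

Lemma nearest (C' : cuboid) xc r : valid_cuboid C' ->
  point_set_dist xc (cuboid_set C') r ->
  exists w h0, r <= h0 /\ dot w w <= 1 /\
    forall y, cuboid_set C' y -> h0 <= dot (vsub y xc) w.
Proof.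
  intros HC Hr. pose proof HC as (Ha&Hb&Hc&_).
  set (s1 := dot (vsub xc (c_o C')) (c_u1 C')).
  set (s2 := dot (vsub xc (c_o C')) (c_u2 C')).
  set (s3 := dot (vsub xc (c_o C')) (c_u3 C')).
  set (p := cuboid_point C' (clamp (c_a C') s1) (clamp (c_b C') s2) (clamp (c_c C') s3)).
  assert (Hsupp : forall y, cuboid_set C' y -> 0 <= dot (vsub y p) (vsub p xc)).
  { intros y (t1&t2&t3&H1&H2&H3&->). unfold p. rewrite pt_sub.
    replace (vsub (cuboid_point C' (clamp (c_a C') s1) (clamp (c_b C') s2) (clamp (c_c C') s3)) xc)
      with (vadd (vsub (c_o C') xc) (lc (clamp (c_a C') s1) (clamp (c_b C') s2) (clamp (c_c C') s3) (c_u1 C') (c_u2 C') (c_u3 C')))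
      by (unfold cuboid_point, lc; destruct C'; simpl; vsimpl; f_equal; ring).
    assert (forall a1 a2 a3, dot (lc a1 a2 a3 (c_u1 C') (c_u2 C') (c_u3 C')) (vsub (c_o C') xc)
        = - (a1 * s1 + a2 * s2 + a3 * s3)).
    { intros. rewrite dot_lc_l. unfold s1, s2, s3.
      destruct C'; simpl; vsimpl; ring. }
    replace (dot (lc (t1 - clamp (c_a C') s1) (t2 - clamp (c_b C') s2) (t3 - clamp (c_c C') s3) (c_u1 C') (c_u2 C') (c_u3 C'))
      (vadd (vsub (c_o C') xc) (lc (clamp (c_a C') s1) (clamp (c_b C') s2) (clamp (c_c C') s3) (c_u1 C') (c_u2 C') (c_u3 C'))))
      with (dot (lc (t1 - clamp (c_a C') s1) (t2 - clamp (c_b C') s2) (t3 - clamp (c_c C') s3) (c_u1 C') (c_u2 C') (c_u3 C')) (vsub (c_o C') xc)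
          + dot (lc (t1 - clamp (c_a C') s1) (t2 - clamp (c_b C') s2) (t3 - clamp (c_c C') s3) (c_u1 C') (c_u2 C') (c_u3 C'))
                (lc (clamp (c_a C') s1) (clamp (c_b C') s2) (clamp (c_c C') s3) (c_u1 C') (c_u2 C') (c_u3 C')))
      by (vsimpl; ring).
    rewrite H, dot_lc by auto.
    pose proof (clamp_prop (c_a C') s1 t1 Ha ltac:(lra)).
    pose proof (clamp_prop (c_b C') s2 t2 Hb ltac:(lra)).
    pose proof (clamp_prop (c_c C') s3 t3 Hc ltac:(lra)).
    nra. }
  set (h0 := vnorm (vsub p xc)).
  assert (Hrh : r <= h0).
  { destruct (Rle_or_lt r h0) as [|Hlt]; auto. exfalso.
    set (m := cuboid_point C' (c_a C' / 2) (c_b C' / 2) (c_c C' / 2)).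
    destruct (small_l (dist p m) (r - h0) (vnorm_pos _) ltac:(lra)) as [l [Hl1 Hl2]].
    set (y := vadd (vscale (1 - l) p) (vscale l m)).
    assert (Hy : cuboid_set C' y).
    { unfold y, p, m. apply in_seg; auto using clamp_in. }
    destruct Hr as [Hlb _].
    assert (r <= dist xc y) by (apply Hlb; eauto).
    pose proof (vdist_tri xc p y). unfold y in H0 at 2. rewrite seg_dist in H0 by lra.
    unfold dist at 2 in H0. rewrite vnorm_sub_sym in H0. fold h0 in H0. lra. }
  pose proof (vnorm_pos (vsub p xc)) as Hh0.
  destruct (Rle_lt_or_eq_dec 0 h0 Hh0) as [Hpos|Hz].
  - exists (vscale (/ h0) (vsub p xc)), h0. split; auto. split.
    + assert (dot (vscale (/ h0) (vsub p xc)) (vscale (/ h0) (vsub p xc)) = / h0 * / h0 * dot (vsub p xc) (vsub p xc))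
        by (vsimpl; ring).
      rewrite H, <- vnorm_sq. fold h0. field_simplify; lra.
    + intros y Hy. apply Hsupp in Hy.
      assert (dot (vsub y xc) (vscale (/ h0) (vsub p xc)) = / h0 * (dot (vsub y p) (vsub p xc) + dot (vsub p xc) (vsub p xc)))
        by (vsimpl; ring).
      rewrite H, <- vnorm_sq. fold h0.
      apply Rmult_le_reg_l with h0; auto. rewrite <- Rmult_assoc, Rinv_r, Rmult_1_l by lra. lra.
  - exists (mkV3 0 0 0), 0. split. rewrite Hz; auto. split. unfold dot; simpl; lra.
    intros. unfold dot; simpl; lra.
Qed.

Definition sg (b : bool) : R := if b then -1 else 1.

Lemma vertex_params (C : cuboid) xc : valid_cuboid C -> cuboid_vertex C xc ->
  exists e1 e2 e3, 0 <= e1 <= c_a C /\ 0 <= e2 <= c_b C /\ 0 <= e3 <= c_c C /\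
    xc = cuboid_point C e1 e2 e3.
Proof.
  intros (Ha&Hb&Hc&_) (b1&b2&b3&->). do 3 eexists. split; [|split;[|split;[|reflexivity]]];
  [destruct b1|destruct b2|destruct b3]; lra.
Qed.

Lemma octant (C : cuboid) xc : valid_cuboid C -> cuboid_vertex C xc ->
  exists G, dot G G = 3 /\
    forall x, cuboid_set C x -> vnorm (vsub x xc) <= dot (vsub x xc) G.
Proof.
  intros HC (b1&b2&b3&->).
  exists (lc (sg b1) (sg b2) (sg b3) (c_u1 C) (c_u2 C) (c_u3 C)). split.
  { rewrite dot_lc by auto. destruct b1, b2, b3; unfold sg; ring. }
  intros x (s&t&r&H1&H2&H3&->). rewrite pt_sub, dot_lc by auto.
  unfold vnorm. rewrite dot_lc by auto.
  set (e1 := if b1 then c_a C else 0). set (e2 := if b2 then c_b C else 0).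
  set (e3 := if b3 then c_c C else 0).
  assert (D1 : 0 <= (s - e1) * sg b1 /\ (s - e1) * (s - e1) = ((s - e1) * sg b1) * ((s - e1) * sg b1))
    by (unfold e1, sg; destruct b1; split; try ring; lra).
  assert (D2 : 0 <= (t - e2) * sg b2 /\ (t - e2) * (t - e2) = ((t - e2) * sg b2) * ((t - e2) * sg b2))
    by (unfold e2, sg; destruct b2; split; try ring; lra).
  assert (D3 : 0 <= (r - e3) * sg b3 /\ (r - e3) * (r - e3) = ((r - e3) * sg b3) * ((r - e3) * sg b3))
    by (unfold e3, sg; destruct b3; split; try ring; lra).
  destruct D1 as [D1 E1], D2 as [D2 E2], D3 as [D3 E3].
  apply sqrt_le_of_sq. lra. rewrite E1, E2, E3.
  set (A := (s - e1) * sg b1) in *. set (B := (t - e2) * sg b2) in *. set (D := (r - e3) * sg b3) in *.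
  nra.
Qed.

Lemma open_nonzero (C : cuboid) xc v : valid_cuboid C ->
  (forall z, cuboid_set C z -> vnorm (vsub z xc) <= dot (vsub z xc) v) ->
  forall y, cuboid_set C y -> y <> xc.
Proof.
  intros HC Hz y Hy Heq. pose proof Hy as (s&t&r&H1&H2&H3&Hyd).
  pose proof HC as (Ha&_&_&Hu&_).
  set (d := Rmin s (c_a C - s) / 2).
  assert (Hd : 0 < d /\ d < s /\ s + d < c_a C).
  { unfold d. pose proof (Rmin_l s (c_a C - s)). pose proof (Rmin_r s (c_a C - s)).
    assert (0 < Rmin s (c_a C - s)) by (apply Rmin_glb_lt; lra). lra. }
  assert (P1 : cuboid_set C (cuboid_point C (s + d) t r)).
  { do 3 eexists; split; [|split;[|split;[|reflexivity]]]; lra. }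
  assert (P2 : cuboid_set C (cuboid_point C (s - d) t r)).
  { do 3 eexists; split; [|split;[|split;[|reflexivity]]]; lra. }
  apply Hz in P1. apply Hz in P2. rewrite <- Heq, Hyd, pt_sub in P1, P2.
  replace (s + d - s) with d in P1 by ring. replace (s - d - s) with (-d) in P2 by ring.
  replace (t - t) with 0 in P1, P2 by ring. replace (r - r) with 0 in P1, P2 by ring.
  assert (N : forall k, vnorm (lc k 0 0 (c_u1 C) (c_u2 C) (c_u3 C)) = Rabs k).
  { intros k. unfold vnorm. rewrite dot_lc by auto.
    replace (k * k + 0 * 0 + 0 * 0) with (k²) by (unfold Rsqr; ring). apply sqrt_Rsqr_abs. }
  rewrite N, dot_lc_l in P1, P2. rewrite Rabs_pos_eq in P1 by lra.
  rewrite Rabs_Ropp, Rabs_pos_eq in P2 by lra. nra.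
Qed.

Lemma comb_sub y z xc t :
  vsub (vadd (vscale t y) (vscale (1 - t) z)) xc =
  vadd (vscale t (vsub y xc)) (vscale (1 - t) (vsub z xc)).
Proof. vsimpl. f_equal; ring. Qed.

Lemma dot_comb a b v t :
  dot (vadd (vscale t a) (vscale (1 - t) b)) v = t * dot a v + (1 - t) * dot b v.
Proof. vsimpl; ring. Qed.

Lemma norm_comb a b t : 0 <= t <= 1 ->
  vnorm (vadd (vscale t a) (vscale (1 - t) b)) <= t * vnorm a + (1 - t) * vnorm b.
Proof.
  intros. eapply Rle_trans. apply vnorm_add. rewrite !vnorm_scale, !Rabs_pos_eq by lra. lra.
Qed.

Lemma cone_convex xc v al : 0 <= cos al -> convex (spherical_cone xc v al).
Proof.
  intros Hc y z t [Hy1 Hy2] [Hz1 Hz2] Ht. unfold dist in *.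
  assert (Hk : dot (vsub (vadd (vscale t y) (vscale (1 - t) z)) xc) v >
          vnorm (vsub (vadd (vscale t y) (vscale (1 - t) z)) xc) * cos al).
  { rewrite comb_sub, dot_comb.
    pose proof (norm_comb (vsub y xc) (vsub z xc) t Ht).
    unfold Rgt in *.
    apply Rle_lt_trans with ((t * vnorm (vsub y xc) + (1 - t) * vnorm (vsub z xc)) * cos al);
      [apply Rmult_le_compat_r; lra|].
    destruct (Rle_lt_or_eq_dec 0 t (proj1 Ht)) as [Ht0|Ht0].
    - nra.
    - subst t. nra. }
  split; [|exact Hk]. intros Heq. rewrite Heq in Hk.
  assert (dot (vsub xc xc) v = 0) by (vsimpl; ring).
  pose proof (vnorm_pos (vsub xc xc)). nra.
Qed.

Lemma closure_cone (Q : V3 -> Prop) xc v al : vnorm v = 1 -> 0 <= cos al ->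
  (forall x, Q x -> spherical_cone xc v al x) ->
  forall x, closure Q x -> vnorm (vsub x xc) * cos al <= dot (vsub x xc) v.
Proof.
  intros Hv Hc HQ x Hx. destruct (Rle_or_lt (vnorm (vsub x xc) * cos al) (dot (vsub x xc) v)); auto.
  exfalso. set (eps := (vnorm (vsub x xc) * cos al - dot (vsub x xc) v) / (2 * (1 + cos al))).
  assert (Heps : 0 < eps) by (unfold eps; apply Rdiv_lt_0_compat; lra).
  destruct (Hx eps Heps) as [q [Hq Hd]]. apply HQ in Hq as [_ Hq]. unfold dist in *.
  assert (vsub x xc = vadd (vsub q xc) (vsub x q)) by (vsimpl; f_equal; ring).
  assert (dot (vsub x xc) v = dot (vsub q xc) v + dot (vsub x q) v) by (rewrite H0; vsimpl; ring).
  pose proof (cs_abs (vsub x q) v). rewrite Hv in H2.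
  pose proof (vnorm_add (vsub q xc) (vsub x q)). rewrite <- H0 in H3.
  assert (vnorm (vsub x xc) * cos al <= vnorm (vsub q xc) * cos al + vnorm (vsub x q) * cos al) by nra.
  assert (eps * (2 * (1 + cos al)) = vnorm (vsub x xc) * cos al - dot (vsub x xc) v)
    by (unfold eps; field; lra).
  pose proof (vnorm_pos (vsub x q)). nra.
Qed.

Lemma extreme_xc (Q : V3 -> Prop) xc v al : vnorm v = 1 -> 0 < cos al ->
  (forall x, Q x -> spherical_cone xc v al x) -> closure Q xc ->
  polytope_vertex Q xc.
Proof.
  intros Hv Hc HQ Hx. split; auto.
  intros y z t Hy Hz Ht Heq.
  pose proof (closure_cone Q xc v al Hv ltac:(lra) HQ y Hy) as Ay.
  pose proof (closure_cone Q xc v al Hv ltac:(lra) HQ z Hz) as Az.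
  pose proof (dot_comb (vsub y xc) (vsub z xc) v t) as E.
  rewrite <- comb_sub, <- Heq in E.
  assert (dot (vsub xc xc) v = 0) by (vsimpl; ring).
  pose proof (vnorm_pos (vsub y xc)). pose proof (vnorm_pos (vsub z xc)).
  rewrite H in E.
  assert (a0 : 0 <= vnorm (vsub y xc) * cos al) by (apply Rmult_le_pos; lra).
  assert (b0 : 0 <= vnorm (vsub z xc) * cos al) by (apply Rmult_le_pos; lra).
  assert (t * (dot (vsub y xc) v - vnorm (vsub y xc) * cos al) >= 0) by (apply Rle_ge, Rmult_le_pos; lra).
  assert ((1 - t) * (dot (vsub z xc) v - vnorm (vsub z xc) * cos al) >= 0) by (apply Rle_ge, Rmult_le_pos; lra).
  assert (t * (vnorm (vsub y xc) * cos al) >= 0) by (apply Rle_ge, Rmult_le_pos; lra).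
  assert ((1 - t) * (vnorm (vsub z xc) * cos al) >= 0) by (apply Rle_ge, Rmult_le_pos; lra).
  assert (t * (vnorm (vsub y xc) * cos al) = 0) by lra.
  assert ((1 - t) * (vnorm (vsub z xc) * cos al) = 0) by lra.
  apply Rmult_integral in H6. apply Rmult_integral in H7.
  assert (vnorm (vsub y xc) * cos al = 0) by (destruct H6; lra).
  assert (vnorm (vsub z xc) * cos al = 0) by (destruct H7; lra).
  apply Rmult_integral in H8. apply Rmult_integral in H9.
  split; apply vsub_zero, vnorm_zero; [destruct H8|destruct H9]; lra.
Qed.

Theorem mainTheorem19 :
  exists alpha' : R, 0 < alpha' < PI / 2 /\
    forall (C C' : cuboid) (xc : V3),
      valid_cuboid C -> valid_cuboid C' ->
      cuboid_vertex C xc ->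
      (exists r, point_set_dist xc (cuboid_set C') r /\
                 hausdorff_dist (cuboid_set C) (cuboid_set C') r) ->
      let Q := convex_hull (fun x => cuboid_set C x \/ cuboid_set C' x) in
      polytope_vertex Q xc /\
      exists v : V3, vnorm v = 1 /\
        (forall x, Q x -> spherical_cone xc v alpha' x).
Proof.
  exists (PI / 2 - 1 / 10).
  assert (Hc : 0 < cos (PI / 2 - 1 / 10) < 1 / 10).
  { rewrite cos_shift. split. apply sin_gt_0; pose proof PI2_1; lra. apply sin_lt_x; lra. }
  split. { pose proof PI2_1. lra. }
  intros C C' xc HC HC' Hvert [r [Hpsd Hhaus]] Q.
  destruct (octant C xc HC Hvert) as [G [HG3 HGP]].
  destruct (nearest C' xc r HC' Hpsd) as [w [h0 [Hrh [Hww Hw']]]].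
  assert (Hnw : vnorm w <= 1) by (apply sqrt_le_of_sq; lra).
  assert (HnG : vnorm G <= 2) by (apply sqrt_le_of_sq; lra).
  assert (HwP : forall x, cuboid_set C x -> 0 <= dot (vsub x xc) w).
  { intros x Hx. destruct (Rle_or_lt 0 (dot (vsub x xc) w)) as [|Hneg]; auto. exfalso.
    set (dl := - dot (vsub x xc) w).
    destruct (haus_approx1 _ _ r x (dl / 2) Hhaus Hx (psd_exists C' x HC') ltac:(unfold dl; lra))
      as [y [Hy Hd]].
    apply Hw' in Hy.
    assert (dot (vsub y x) w = dot (vsub y xc) w - dot (vsub x xc) w) by (vsimpl; ring).
    pose proof (cs (vsub y x) w). pose proof (vnorm_pos (vsub y x)).
    unfold dist in Hd. rewrite vnorm_sub_sym in Hd.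
    assert (vnorm (vsub y x) * vnorm w <= vnorm (vsub y x)) by nra.
    unfold dl in *. lra. }
  set (v := vadd G (vscale 3 w)).
  assert (Hdv : forall z, dot z v = dot z G + 3 * dot z w) by (intros; unfold v; vsimpl; ring).
  assert (HP : forall z, cuboid_set C z -> vnorm (vsub z xc) <= dot (vsub z xc) v).
  { intros z Hz. rewrite Hdv. pose proof (HGP z Hz). pose proof (HwP z Hz). lra. }
  assert (HP' : forall y, cuboid_set C' y -> vnorm (vsub y xc) <= dot (vsub y xc) v).
  { intros y Hy. destruct (Rle_or_lt (vnorm (vsub y xc)) (dot (vsub y xc) v)) as [|Hlt]; auto.
    exfalso. set (eps := (vnorm (vsub y xc) - dot (vsub y xc) v) / 6).
    destruct (haus_approx2 _ _ r y eps Hhaus Hy (psd_exists C y HC) ltac:(unfold eps; lra))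
      as [x [Hx Hd]].
    unfold dist in Hd.
    pose proof (HGP x Hx). pose proof (Hw' y Hy).
    assert (dot (vsub y xc) G = dot (vsub x xc) G + dot (vsub y x) G) by (vsimpl; ring).
    pose proof (cs_abs (vsub y x) G). pose proof (vnorm_pos (vsub y x)).
    assert (vnorm (vsub y x) * vnorm G <= 2 * vnorm (vsub y x)) by nra.
    assert (vsub y xc = vadd (vsub y x) (vsub x xc)) by (vsimpl; f_equal; ring).
    pose proof (vnorm_add (vsub y x) (vsub x xc)). rewrite <- H5 in H6.
    rewrite Hdv in Hlt. unfold eps in *. rewrite Hdv in Hd. lra. }
  pose proof (open_nonzero C xc v HC HP) as NZ.
  pose proof (open_nonzero C' xc v HC' HP') as NZ'.
  assert (Hpos : forall z, cuboid_set C z -> 0 < vnorm (vsub z xc)).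
  { intros z Hz. destruct (Rle_lt_or_eq_dec 0 _ (vnorm_pos (vsub z xc))); auto.
    exfalso. apply (NZ z Hz). apply vsub_zero, vnorm_zero. auto. }
  assert (Hpos' : forall z, cuboid_set C' z -> 0 < vnorm (vsub z xc)).
  { intros z Hz. destruct (Rle_lt_or_eq_dec 0 _ (vnorm_pos (vsub z xc))); auto.
    exfalso. apply (NZ' z Hz). apply vsub_zero, vnorm_zero. auto. }
  set (m := cuboid_point C (c_a C / 2) (c_b C / 2) (c_c C / 2)).
  assert (Hm : cuboid_set C m) by (apply mid_in; auto).
  set (Nv := vnorm v).
  assert (HNv : 0 < Nv /\ Nv <= 5).
  { split.
    - pose proof (HP m Hm). pose proof (Hpos m Hm). pose proof (cs (vsub m xc) v).
      fold Nv in H1. pose proof (vnorm_pos v). fold Nv in H2.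
      destruct (Rle_lt_or_eq_dec 0 _ H2); auto. rewrite <- e in H1. lra.
    - unfold Nv, v. eapply Rle_trans. apply vnorm_add. rewrite vnorm_scale, Rabs_pos_eq; lra. }
  set (vh := vscale (/ Nv) v).
  assert (Hvh : vnorm vh = 1).
  { unfold vh. rewrite vnorm_scale, Rabs_pos_eq. fold Nv. field; lra.
    left; apply Rinv_0_lt_compat; lra. }
  assert (Hcone : forall z, cuboid_set C z \/ cuboid_set C' z ->
            spherical_cone xc vh (PI / 2 - 1 / 10) z).
  { intros z Hz.
    assert (A : 0 < vnorm (vsub z xc) /\ vnorm (vsub z xc) <= dot (vsub z xc) v /\ z <> xc)
      by (destruct Hz as [Hz|Hz]; auto).
    destruct A as (A1&A2&A3). split; auto. unfold dist.
    assert (dot (vsub z xc) vh = / Nv * dot (vsub z xc) v) by (unfold vh; vsimpl; ring).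
    rewrite H. apply Rlt_le_trans with (vnorm (vsub z xc) / 5).
    - nra.
    - unfold Rdiv. rewrite (Rmult_comm (vnorm _)).
      assert (/ 5 <= / Nv) by (apply Rinv_le_contravar; lra).
      apply Rmult_le_compat; lra. }
  assert (HQ : forall x, Q x -> spherical_cone xc vh (PI / 2 - 1 / 10) x).
  { intros x Hx. apply Hx; [apply cone_convex; lra | exact Hcone]. }
  split.
  - apply (extreme_xc Q xc vh (PI / 2 - 1 / 10) Hvh ltac:(lra) HQ).
    intros eps Heps.
    destruct (vertex_params C xc HC Hvert) as (e1&e2&e3&He1&He2&He3&Hxc).
    destruct (small_l (dist xc m) eps (vnorm_pos _) Heps) as [l [Hl1 Hl2]].
    exists (vadd (vscale (1 - l) xc) (vscale l m)). split.
    + intros K _ HK. apply HK. left. rewrite Hxc. unfold m. apply in_seg; auto.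
    + rewrite seg_dist; lra.
  - exists vh. split; auto.
Qed.
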